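(* Let $k\ge2$, let $n$ be divisible by $k$, and consider the $n$-vertex bipartite construction with ratio $\rho$ and with parts $X,Y$ ($|X|=\rho n$), where all edges touching $X$ are red and all edges inside $Y$ are blue. Then: (1) writing $|Y|=qk+r$ with $0\le r<k$, the largest number of blue edges in a $K_k$-factor is $q\binom{k}{2}+\binom{r}{2}=\frac{k-1}{2}(1-\rho)n+O(1)$; (2) the largest number of red edges in a $K_k$-factor is $\left(\frac{k-1}{2}-\frac{k-\lfloor k\rho\rfloor-1}{2}\left(\frac{\lfloor k\rho\rfloor}{k}+1-2\rho\right)\right)n$.
   Context: A $K_k$-factor of $K_n$ ($k\mid n$) is a collection of $n/k$ vertex-disjoint copies of $K_k$ covering all vertices; its edges are the edges of these cliques. The bipartite construction with ratio $\rho$ is the red/blue-coloring of $K_n$ with vertex partition $X\cup Y$, $|X|=\rho n$, in which all edges touching $X$ get one color and all edges inside $Y$ get the other color. *)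

(* Defs.v *)
From HB Require Import structures.
From mathcomp Require Import all_boot all_order all_algebra.
Set Implicit Arguments. Unset Strict Implicit. Unset Printing Implicit Defensive.
Import Order.TTheory GRing.Theory Num.Theory.

(* Vertices of K_n are 'I_n; an edge of K_n is a 2-element vertex set. *)

(* A K_k-factor of K_n: a partition of the vertex set into blocks
   (vertex sets of the cliques), each of size k. *)
Definition Kfactor (n k : nat) (P : {set {set 'I_n}}) : bool :=
  partition P [set: 'I_n] && [forall B in P, #|B| == k].

Definition factor_edges (n : nat) (P : {set {set 'I_n}}) : {set {set 'I_n}} :=
  [set e : {set 'I_n} | (#|e| == 2) && [exists B in P, e \subset B]].

Definition red_edge (n : nat) (X : {set 'I_n}) (e : {set 'I_n}) : bool :=
  e :&: X != set0.
Definition blue_edge (n : nat) (X : {set 'I_n}) (e : {set 'I_n}) : bool :=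
  e \subset ~: X.

Definition nb_red (n : nat) (X : {set 'I_n}) (P : {set {set 'I_n}}) : nat :=
  #|[set e in factor_edges P | red_edge X e]|.
Definition nb_blue (n : nat) (X : {set 'I_n}) (P : {set {set 'I_n}}) : nat :=
  #|[set e in factor_edges P | blue_edge X e]|.

Definition max_over_factors (n k : nat) (f : {set {set 'I_n}} -> nat) (v : nat) : Prop :=
  (exists2 P, @Kfactor n k P & f P = v) /\ (forall P, @Kfactor n k P -> f P <= v)%N.

(* Main.v *)
Require Import Defs.
From HB Require Import structures.
From mathcomp Require Import all_boot all_order all_algebra.
From mathcomp Require Import zify ring lra.
Import Order.TTheory GRing.Theory Num.Theory.

Section S.
Variable n : nat.
Implicit Types (P : {set {set 'I_n}}) (B W : {set 'I_n}).

Lemma card_sumI (T : finType) (A : {set T}) (p : pred T) :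
  #|[set x in A | p x]| = \sum_(x in A) (p x : nat).
Proof.
rewrite -sum1_card [RHS]big_mkcond /= [LHS]big_mkcond /=.
by apply: eq_bigr => x _; rewrite inE; case: (x \in A); case: (p x).
Qed.

Lemma part_uniq P B B' v : partition P setT -> B \in P -> B' \in P ->
  v \in B -> v \in B' -> B = B'.
Proof.
case/and3P=> _ tP _ PB PB' vB vB'.
by rewrite -(def_pblock tP PB vB) (def_pblock tP PB' vB').
Qed.

Lemma sum_indic_one P (S : {set {set 'I_n}}) :
  (forall e, e \in S -> exists2 B, B \in P & forall B', B' \in P -> (e \subset B') = (B' == B)) ->
  \sum_(B in P) #|[set e in S | e \subset B]| = #|S|.
Proof.
move=> H.
have -> : \sum_(B in P) #|[set e in S | e \subset B]| =
          \sum_(B in P) \sum_(e in S) ((e \subset B) : nat).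
  by apply: eq_bigr => B _; rewrite card_sumI.
rewrite exchange_big /= -sum1_card; apply: eq_bigr => e eS.
have [B PB HB] := H e eS.
rewrite (bigD1 B) //= (HB B PB) eqxx big1 // => B' /andP[PB' nB'].
by rewrite (HB B' PB') (negbTE nB').
Qed.

Lemma sum_blocks_edges P W : partition P setT ->
  #|[set e in factor_edges P | e \subset W]| = \sum_(B in P) 'C(#|B :&: W|, 2).
Proof.
move=> hP; set S := [set e in factor_edges P | e \subset W].
rewrite -(@sum_indic_one P S).
  apply: eq_bigr => B PB; rewrite -cards_draws; apply: eq_card => e.
  rewrite !inE subsetI; apply/andP/andP.
    by case=> /andP[/andP[e2 _] eW] eB; rewrite eB eW.
  case=> /andP[eB eW] e2; split=> //; rewrite e2 eW andbT /=; apply/existsP; exists B.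
  by rewrite PB eB.
move=> e; rewrite !inE => /andP[/andP[e2 /existsP[B /andP[PB eB]]] _].
exists B => // B' PB'; apply/idP/eqP => [eB'|->//].
have /set0Pn[v ve] : e != set0 by apply/eqP => e0; move: e2; rewrite e0 cards0.
exact: (@part_uniq _ _ _ v hP PB' PB (subsetP eB' v ve) (subsetP eB v ve)).
Qed.

Lemma sum_blocks_card P W : partition P setT ->
  \sum_(B in P) #|B :&: W| = #|W|.
Proof.
move=> hP.
have -> : \sum_(B in P) #|B :&: W| = \sum_(B in P) \sum_(v in W) ((v \in B) : nat).
  apply: eq_bigr => B _; rewrite -card_sumI; apply: eq_card => v.
  by rewrite !inE andbC.
rewrite exchange_big /= -sum1_card; apply: eq_bigr => v vW.
case/and3P: hP => /eqP cP tP _.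
have vc : v \in cover P by rewrite cP inE.
rewrite (bigD1 (pblock P v)) ?pblock_mem //= mem_pblock vc big1 // => B /andP[PB nB].
apply/eqP; rewrite eqb0; apply/negP => vB; move/eqP: nB; apply.
by rewrite (def_pblock tP PB vB).
Qed.

End S.


Lemma bin2E x : 'C(x, 2) * 2 + x = x * x.
Proof.
elim: x => [//|x IH]; rewrite binS bin1 mulnDl mulSn mulnS; lia.
Qed.

Lemma divmodE k q r : r < k -> (q * k + r) %/ k = q /\ (q * k + r) %% k = r.
Proof.
move=> rk; have k0 : 0 < k by lia.
by rewrite divnMDl // divn_small // addn0 modnMDl modn_small.
Qed.

Lemma aux b d e A R Bb K :
  A * 2 + (b + e.+1) = (b + e.+1) * (b + e.+1) ->
  R * 2 + (b + d) = (b + d) * (b + d) ->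
  Bb * 2 + b = b * b ->
  K * 2 + (b + d + e.+1) = (b + d + e.+1) * (b + d + e.+1) ->
  R + A <= K + Bb.
Proof.
move=> e1 e2 e3 e4.
have : (R + A) * 2 + d * e.+1 * 2 = (K + Bb) * 2 by nia.
lia.
Qed.

Definition F k y := y %/ k * 'C(k, 2) + 'C(y %% k, 2).

Lemma F_step k y a : 0 < k -> a <= k -> F k y + 'C(a, 2) <= F k (y + a).
Proof.
move=> k0 ak; rewrite /F.
have := divn_eq y k; have := ltn_pmod y k0.
set q := y %/ k; set r := y %% k => rk ey.
case: (ltnP (r + a) k) => h.
  have -> : y + a = q * k + (r + a) by lia.
  have [-> ->] := divmodE _ q _ h.
  have := bin2E a; have := bin2E r; have := bin2E (r + a).
  set A := 'C(a, 2); set R := 'C(r, 2); set RA := 'C(r + a, 2).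
  rewrite mulnDl !mulnDr => e1 e2 e3.
  suff : R + A <= RA by lia.
  lia.
have h2 : r + a - k < k by lia.
have -> : y + a = q.+1 * k + (r + a - k) by rewrite mulSn; lia.
have [-> ->] := divmodE _ q.+1 _ h2.
set b := r + a - k.
have [d ed] : exists d, r = b + d by exists (r - b); lia.
have [e ee] : exists e, k = r + e.+1 by exists (k - r).-1; lia.
have ea : a = b + e.+1 by lia.
have := bin2E a; have := bin2E r; have := bin2E b; have := bin2E k.
rewrite ea ee ed mulSn => e1 e2 e3 e4.
have := @aux _ _ _ _ _ _ _ e4 e3 e2 e1; lia.
Qed.

Lemma lin_low a x : a * 2 * x <= 'C(x, 2) * 2 + (a * a + a).
Proof.
have := bin2E x; set C := 'C(x, 2) => e.
case: (leqP x a) => h.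
  have : (a - x) * (a - x + 1) + a * 2 * x = C * 2 + (a * a + a) by nia.
  lia.
have : (x - a) * (x - a - 1) + a * 2 * x = C * 2 + (a * a + a) by nia.
lia.
Qed.

Lemma lin_eq a x : (x == a) || (x == a.+1) -> a * 2 * x = 'C(x, 2) * 2 + (a * a + a).
Proof.
case/orP=> /eqP ->; have := bin2E a; try have := bin2E a.+1; nia.
Qed.

Lemma F_low_k k y : 0 < k -> k <= y -> F k y = F k (y - k) + 'C(k, 2).
Proof.
move=> k0 ky; rewrite /F.
have := divn_eq (y - k) k; have := ltn_pmod (y - k) k0.
set q := (y - k) %/ k; set r := (y - k) %% k => rk ey.
have -> : y = q.+1 * k + r by rewrite mulSn; lia.
have [-> ->] := divmodE _ q.+1 _ rk.
by rewrite mulSn; lia.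
Qed.


Section Cons.
Variables (n : nat) (Z : {set 'I_n}).

Definition sq := enum Z ++ enum (~: Z).

Lemma sq_size : size sq = n.
Proof. by rewrite size_cat -!cardE cardsC card_ord. Qed.

Lemma mem_sq v : v \in sq.
Proof. by rewrite mem_cat !mem_enum inE; case: (v \in Z). Qed.

Lemma rank_lt v : index v sq < n.
Proof. by rewrite -[X in _ < X]sq_size index_mem mem_sq. Qed.

Definition R v : 'I_n := Ordinal (rank_lt v).

Lemma R_inj : injective R.
Proof.
move=> u v /(congr1 val) /= e.
by rewrite -(nth_index u (mem_sq u)) e nth_index // mem_sq.
Qed.

Lemma R_Z v : (R v < #|Z|) = (v \in Z).
Proof.
rewrite /= /sq index_cat mem_enum; case vZ: (v \in Z) => /=.
  by rewrite cardE index_mem mem_enum.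
by rewrite cardE ltnNge leq_addr.
Qed.

Lemma card_fib (p : pred nat) : #|[set v | p (R v)]| = \sum_(i < n) (p i : nat).
Proof.
rewrite (reindex_inj R_inj) -sum1_card big_mkcond /=.
by apply: eq_bigr => v _; rewrite inE; case: (p _).
Qed.

Variables (m k : nat) (h : nat -> nat).
Hypothesis k0 : 0 < k.
Hypothesis hm : forall i, i < n -> h i < m.
Hypothesis hk : forall j, j < m -> \sum_(i < n) ((h i == j) : nat) = k.

Definition fib (j : 'I_m) := [set v | h (R v) == j].
Definition Pc := [set fib j | j : 'I_m].

Lemma fib_card j : #|fib j| = k.
Proof. by rewrite /fib (card_fib (fun i => h i == j)) hk. Qed.

Lemma Pc_prop : partition Pc setT /\ injective fib.
Proof.
have n0 : set0 \notin Pc.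
  apply/imsetP => -[j _ e]; have := fib_card j; rewrite -e cards0; lia.
have [tP inj] : trivIset Pc /\ {in 'I_m &, injective fib}.
  apply: trivIimset => // i j _ _ nji; rewrite -setI_eq0; apply/eqP/setP => v.
  rewrite !inE; apply/negP => /andP[/eqP e1 /eqP e2]; move/eqP: nji; apply.
  by apply: val_inj; rewrite /= -e1 -e2.
split; last by move=> i j; apply: inj.
rewrite /partition tP n0 andbT /= andbT; apply/eqP/setP => v.
rewrite inE; apply/bigcupP; exists (fib (Ordinal (@hm _ (ltn_ord (R v))))).
  by apply: imset_f.
by rewrite inE.
Qed.

Lemma Pc_Kfactor : Kfactor k Pc.
Proof.
rewrite /Kfactor (proj1 Pc_prop) /=; apply/forallP => B; apply/implyP.
by case/imsetP => j _ ->; rewrite fib_card.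
Qed.

Lemma Pc_sum (G : {set 'I_n} -> nat) :
  \sum_(B in Pc) G B = \sum_(j < m) G (fib j).
Proof.
by rewrite big_imset //= => i j _ _; apply: (proj2 Pc_prop).
Qed.

Lemma fib_Z j : #|fib j :&: Z| = \sum_(i < n) (((h i == j) && (i < #|Z|)) : nat).
Proof.
rewrite -(card_fib (fun i => (h i == j) && (i < #|Z|))); apply: eq_card => v.
by rewrite !inE R_Z.
Qed.

End Cons.


Lemma divk_eq N k j : 0 < k -> (N %/ k == j) = (j * k <= N) && (N < j * k + k).
Proof.
move=> k0; rewrite eqn_leq andbC -leq_divRL //; congr (_ && _).
by rewrite -ltnS ltn_divLR // mulSn addnC.
Qed.

Lemma L1 N k j : 0 < k -> \sum_(0 <= i < N) ((i %/ k == j) : nat) = minn k (N - j * k).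
Proof.
move=> k0; elim: N => [|N IH]; first by rewrite big_geq // sub0n minn0.
rewrite big_nat_recr //= IH divk_eq //.
case: (leqP (j * k) N) => h1; case: (ltnP N (j * k + k)) => h2 /=; lia.
Qed.

Lemma L2 N m j : j < m -> \sum_(0 <= i < N) ((i %% m == j) : nat) = N %/ m + (j < N %% m).
Proof.
move=> jm; have m0 : 0 < m by lia.
elim: N => [|N IH]; first by rewrite big_geq // div0n mod0n.
rewrite big_nat_recr //= IH.
have := divn_eq N m; have := ltn_pmod N m0.
set q := N %/ m; set r := N %% m => rm eN.
case: (ltnP r.+1 m) => h.
  have -> : N.+1 = q * m + r.+1 by lia.
  have [-> ->] := divmodE _ q _ h.
  lia.
have -> : N.+1 = q.+1 * m + 0 by rewrite mulSn; lia.
have h0 : 0 < m by lia.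
have [-> ->] := divmodE _ q.+1 _ h0.
lia.
Qed.

Lemma sum_cut (p : pred nat) N y : y <= N ->
  \sum_(i < N) ((p i && (i < y)) : nat) = \sum_(i < y) (p i : nat).
Proof.
move=> yN.
rewrite -(big_mkord xpredT (fun i => ((p i && (i < y)) : nat))).
rewrite -(big_mkord xpredT (fun i => (p i : nat))).
rewrite (big_cat_nat _ (n := y)) //= [X in _ + X]big1_seq ?addn0.
  by apply: eq_big_nat => i /andP[_ ->]; rewrite andbT.
by move=> i /andP[_]; rewrite mem_index_iota => /andP[h _]; rewrite ltnNge h andbF.
Qed.

Lemma blue_sum m k y : 0 < k -> y <= m * k ->
  \sum_(j < m) 'C(minn k (y - j * k), 2) = F k y.
Proof.
move=> k0; elim: m y => [|m IH] y hy.
  rewrite big_ord0. have y0 : y = 0 by rewrite mul0n in hy; lia.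
  by rewrite y0 /F div0n mod0n.
rewrite big_ord_recl /= mul0n subn0.
case: (leqP k y) => ky.
  rewrite (@F_low_k k y k0 ky) -(IH (y - k)); last by rewrite mulSn in hy; lia.
  rewrite addnC; congr (_ + _); apply: eq_bigr => j _.
  by rewrite /bump leq0n add1n mulSn subnDA.
rewrite big1 => [|j _]; last first.
  by rewrite /bump leq0n add1n mulSn; have -> : y - (k + j * k) = 0 by lia.
rewrite /F divn_small // modn_small //; lia.
Qed.


Section P.
Variables (n k : nat) (X : {set 'I_n}) (P : {set {set 'I_n}}).
Hypothesis k0 : 0 < k.
Hypothesis hP : Kfactor k P.

Lemma KP_part : partition P setT.
Proof. by case/andP: hP. Qed.

Lemma KP_card B : B \in P -> #|B| = k.
Proof. by case/andP: hP => _ /forallP/(_ B)/implyP H PB; apply/eqP/H. Qed.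

Lemma KP_size : #|P| * k = n.
Proof.
rewrite -sum_nat_const -[RHS]card_ord -cardsT (card_partition KP_part).
by apply: eq_bigr => B PB; rewrite KP_card.
Qed.

Lemma KP_blue : nb_blue X P = \sum_(B in P) 'C(#|B :&: ~: X|, 2).
Proof. exact: (@sum_blocks_edges _ P (~: X) KP_part). Qed.

Lemma KP_total : nb_red X P + nb_blue X P = #|P| * 'C(k, 2).
Proof.
rewrite /nb_red /nb_blue (@card_sumI _ (factor_edges P) (red_edge X)) (@card_sumI _ (factor_edges P) (blue_edge X)) -big_split /=.
have -> : \sum_(i in factor_edges P) (red_edge X i + blue_edge X i) = #|factor_edges P|.
  rewrite -sum1_card; apply: eq_bigr => e _.
  rewrite /red_edge /blue_edge setI_eq0 disjoints_subset.
  by case: (e \subset ~: X).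
have -> : #|factor_edges P| = #|[set e in factor_edges P | e \subset setT]|.
  by apply: eq_card => e; rewrite !inE subsetT andbT.
rewrite (@sum_blocks_edges _ P setT KP_part) -sum_nat_const; apply: eq_bigr => B PB.
by rewrite setIT KP_card.
Qed.

Lemma KP_ysum : \sum_(B in P) #|B :&: ~: X| = #|~: X|.
Proof. exact: (@sum_blocks_card _ P (~: X) KP_part). Qed.

Lemma F_sum (I : Type) (r : seq I) (Q : pred I) (g : I -> nat) :
  (forall i, Q i -> g i <= k) ->
  \sum_(i <- r | Q i) 'C(g i, 2) <= F k (\sum_(i <- r | Q i) g i).
Proof.
move=> H; elim/big_rec2: _ => [|i a b Qi IH]; first by rewrite /F div0n mod0n.
have := @F_step k a (g i) k0 (H i Qi); rewrite addnC (addnC (g i)); lia.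
Qed.

Lemma KP_blue_le : nb_blue X P <= F k #|~: X|.
Proof.
rewrite KP_blue -KP_ysum; apply: F_sum => B PB.
by rewrite -(@KP_card B PB) subset_leq_card // subsetIl.
Qed.

Lemma KP_blue_ge a : a * 2 * #|~: X| <= nb_blue X P * 2 + #|P| * (a * a + a).
Proof.
rewrite KP_blue -KP_ysum big_distrr /= big_distrl /= -sum_nat_const -big_split /=.
by apply: leq_sum => B _; apply: lin_low.
Qed.

Lemma KP_blue_eq a : (forall B, B \in P -> (#|B :&: ~: X| == a) || (#|B :&: ~: X| == a.+1)) ->
  a * 2 * #|~: X| = nb_blue X P * 2 + #|P| * (a * a + a).
Proof.
move=> H.
rewrite KP_blue -KP_ysum big_distrr /= big_distrl /= -sum_nat_const -big_split /=.
by apply: eq_bigr => B PB; apply: lin_eq; apply: H.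
Qed.

End P.


Lemma case_nat k m a f0 s t : 0 < m -> s < m -> t < m -> (a + f0) * m + s + t = k * m ->
  (k = a + f0 /\ s = 0 /\ t = 0) \/ (k = (a + f0).+1 /\ t = m - s /\ s <= m).
Proof.
move=> m0 sm tm e.
case: (ltngtP k (a + f0)) => h.
- have : k * m < (a + f0) * m by rewrite ltn_pmul2r.
  lia.
- case: (ltngtP k (a + f0).+1) => h2.
  + lia.
  + have : (a + f0).+2 * m <= k * m by rewrite leq_pmul2r.
    rewrite !mulSn; lia.
  + right; rewrite h2 mulSn in e; lia.
- left; rewrite h in e; lia.
Qed.

Local Open Scope ring_scope.

Lemma rat_id (K M A F0 S T V SB Cc : rat) : M != 0 -> K != 0 ->
  V + SB = M * Cc -> A * 2 * (A * M + S) = SB * 2 + M * (A * A + A) ->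
  Cc * 2 + K = K * K ->
  ((A = K - F0 /\ S = 0 /\ T = 0) \/ (A = K - F0 - 1 /\ T = M - S)) ->
  V = ((K - 1) / 2 - (K - F0 - 1) / 2 * (F0 / K + 1 - 2 * ((F0 * M + T) / (M * K)))) * (M * K).
Proof.
move=> M0 K0 e1 e2 e3 hc.
have eV : V = M * Cc - SB by rewrite -e1 addrK.
have eSB : SB = (A * 2 * (A * M + S) - M * (A * A + A)) / 2.
  by rewrite e2 addrK mulfK.
have eC : Cc = (K * K - K) / 2 by rewrite -e3 addrK mulfK.
rewrite eV eSB eC.
case: hc => [[-> [-> ->]] | [-> ->]]; field; rewrite ?M0 ?K0 //.
Qed.

Lemma rat_bound (K R : rat) : 0 <= R -> R <= K ->
  `|(R * R - R) / 2 - (K - 1) / 2 * R| <= K * K.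
Proof.
move=> h1 h2; rewrite ler_norml; apply/andP; split; nra.
Qed.

Local Open Scope ring_scope.

Theorem lemma3p3 (k : nat) (hk : (2 <= k)%N) :
  exists C : rat, forall (n : nat) (hkn : (k %| n)%N) (X : {set 'I_n}),
    let rho : rat := #|X|%:R / n%:R in
    let q := (#|~: X| %/ k)%N in
    let r := (#|~: X| %% k)%N in
    let f : int := Num.floor (k%:R * rho) in
    @max_over_factors n k (nb_blue X) (q * 'C(k, 2) + 'C(r, 2))%N /\
    `|((q * 'C(k, 2) + 'C(r, 2))%N)%:R - (k%:R - 1) / 2 * (1 - rho) * n%:R| <= C /\
    (exists v : nat, @max_over_factors n k (nb_red X) v /\
       v%:R = ((k%:R - 1) / 2
                - (k%:R - f%:~R - 1) / 2 * (f%:~R / k%:R + 1 - 2 * rho)) * n%:R).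
Proof.
exists (k%:R * k%:R) => n hkn X rho q r f.
have k0 : (0 < k)%N by lia.
set m := (n %/ k)%N.
have nmk : n = (m * k)%N by rewrite divnK.
set y := #|~: X|; set x := #|X|.
have xy : (x + y = n)%N by rewrite /x /y cardsC card_ord.
have yn : (y <= n)%N by lia.
have xyR : (n%:R : rat) = #|X|%:R + #|~: X|%:R by rewrite -natrD cardsC card_ord.
have Psize : forall P : {set {set 'I_n}}, @Kfactor n k P -> #|P| = m.
  move=> P KP; apply/eqP; rewrite -(eqn_pmul2r k0) -nmk; apply/eqP.
  exact: (@KP_size _ _ _ KP).
have hmB : forall i, (i < n)%N -> (i %/ k < m)%N.
  by move=> i; rewrite ltn_divLR // -nmk.
have hkB : forall j, (j < m)%N -> (\sum_(i < n) (((i %/ k)%N == j) : nat))%N = k.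
  move=> j jm; rewrite -(big_mkord xpredT (fun i => (((i %/ k)%N == j) : nat))) L1 //.
  have : (j.+1 * k <= m * k)%N by rewrite leq_pmul2r.
  rewrite mulSn; lia.
set Pb := @Pc n (~: X) m (fun i => (i %/ k)%N).
have KPb : Kfactor k Pb := @Pc_Kfactor _ (~: X) m k _ k0 hmB hkB.
have Fy : F k y = (q * 'C(k, 2) + 'C(r, 2))%N by [].
have blue_val : nb_blue X Pb = F k y.
  rewrite (@KP_blue _ _ X _ KPb) (@Pc_sum _ (~: X) m k _ k0 hmB hkB (fun B => 'C(#|B :&: ~: X|, 2))).
  rewrite -(@blue_sum m k y k0); last by rewrite -nmk.
  apply: eq_bigr => j _; rewrite fib_Z (@sum_cut (fun i => (i %/ k)%N == j)); last by [].
  by rewrite -(big_mkord xpredT (fun i => (((i %/ k)%N == j) : nat))) L1.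
split.
  split; first by exists Pb => //; rewrite blue_val.
  by move=> P KP; rewrite -Fy; apply: (@KP_blue_le _ _ X _ k0 KP).
split.
  have e1 : (1 - rho) * n%:R = y%:R.
    have [n0|n0] := eqVneq n 0%N.
      have y0 : y = 0%N by lia.
      by rewrite n0 y0 mulr0.
    rewrite /rho mulrBl mul1r mulfVK ?pnatr_eq0 // xyR; ring.
  rewrite -mulrA e1.
  have ey : y = (q * k + r)%N by rewrite /q /r -divn_eq.
  have rk : (r <= k)%N by rewrite ltnW // ltn_pmod.
  have := bin2E k; have := bin2E r => e2 e3.
  have -> : ((q * 'C(k, 2) + 'C(r, 2))%N)%:R =
     (r%:R * r%:R - r%:R) / 2 + (k%:R - 1) / 2 * (q%:R * k%:R) :> rat.
    have e2' : ('C(r, 2))%:R = (r%:R * r%:R - r%:R) / 2 :> rat.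
      rewrite -natrM -e2 natrD natrM addrK mulfK //.
    have e3' : ('C(k, 2))%:R = (k%:R * k%:R - k%:R) / 2 :> rat.
      rewrite -natrM -e3 natrD natrM addrK mulfK //.
    by rewrite natrD natrM e2' e3'; field.
  rewrite ey natrD natrM.
  have -> : (r%:R * r%:R - r%:R) / 2 + (k%:R - 1) / 2 * (q%:R * k%:R) -
      (k%:R - 1) / 2 * (q%:R * k%:R + r%:R) =
      (r%:R * r%:R - r%:R) / 2 - (k%:R - 1) / 2 * r%:R :> rat by ring.
  by apply: rat_bound; rewrite ?ler0n ?ler_nat.
have hmR : forall i, (i < n)%N -> (i %% m < m)%N.
  move=> i ilt; rewrite ltn_pmod //; move: ilt; rewrite nmk; case: (m) => //.
have hkR : forall j, (j < m)%N -> (\sum_(i < n) (((i %% m)%N == j) : nat))%N = k.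
  move=> j jm; rewrite -(big_mkord xpredT (fun i => (((i %% m)%N == j) : nat))) L2 //.
  have m0 : (0 < m)%N by lia.
  by rewrite nmk mulKn // ?modnMr ?modnMl addn0.
set Pr := @Pc n (~: X) m (fun i => (i %% m)%N).
have KPr : Kfactor k Pr := @Pc_Kfactor _ (~: X) m k _ k0 hmR hkR.
set a := (y %/ m)%N.
have blocks : forall B, B \in Pr -> (#|B :&: ~: X| == a) || (#|B :&: ~: X| == a.+1).
  move=> B /imsetP[j _ ->]; rewrite fib_Z (@sum_cut (fun i => (i %% m)%N == j)) //.
  rewrite -(big_mkord xpredT (fun i => (((i %% m)%N == j) : nat))) L2 //.
  by case: (j < y %% m)%N; rewrite ?addn0 ?addn1 eqxx ?orbT.
have eqR := @KP_blue_eq _ _ X _ KPr a blocks.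
rewrite (Psize _ KPr) in eqR.
have t2 := @KP_total _ _ X _ KPr; rewrite (Psize _ KPr) in t2.
exists (nb_red X Pr); split.
  split; first by exists Pr.
  move=> P KP.
  have t1 := @KP_total _ _ X _ KP.
  have g := @KP_blue_ge _ _ X _ KP a.
  rewrite (Psize _ KP) in t1 g.
  lia.
have [n0|nP] := eqVneq n 0%N.
  have m0 : m = 0%N by rewrite /m n0 div0n.
  rewrite m0 mul0n in t2.
  have -> : nb_red X Pr = 0%N by lia.
  by rewrite n0 mulr0.
have m0 : (0 < m)%N.
  case: (posnP m) => // e; move: nP; rewrite nmk e mul0n eqxx //.
set f0 := (x %/ m)%N; set t := (x %% m)%N; set s := (y %% m)%N.
have ex : x = (f0 * m + t)%N := divn_eq x m.
have ey : y = (a * m + s)%N := divn_eq y m.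
have tm : (t < m)%N := ltn_pmod _ m0.
have sm : (s < m)%N := ltn_pmod _ m0.
have hsum : ((a + f0) * m + s + t = k * m)%N.
  rewrite mulnDl; have := nmk; lia.
have hc := @case_nat k m a f0 s t m0 sm tm hsum.
have nR : (n%:R : rat) = m%:R * k%:R by rewrite nmk natrM.
have xR : (#|X|%:R : rat) = f0%:R * m%:R + t%:R by rewrite -natrM -natrD -ex.
have mR : (m%:R : rat) != 0 by rewrite pnatr_eq0 -lt0n.
have kR : (k%:R : rat) != 0 by rewrite pnatr_eq0 -lt0n.
have ef : f = f0%:Z.
  rewrite /f; apply: floor_def.
  have -> : k%:R * rho = f0%:R + t%:R / m%:R.
    by rewrite /rho nR xR; field; rewrite mR kR.
  have u0 : 0 <= t%:R / m%:R :> rat by rewrite divr_ge0.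
  have u1 : t%:R / m%:R < 1 :> rat by rewrite ltr_pdivrMr ?mul1r ?ltr_nat // ltr0n.
  rewrite intrD -!pmulrn; apply/andP; split; lra.
rewrite ef -pmulrn /rho nR xR.
apply: (@rat_id _ _ a%:R _ s%:R _ _ (nb_blue X Pr)%:R ('C(k, 2))%:R) => //.
- by rewrite -natrM -natrD t2.
- move: eqR; rewrite -/y ey => eqR.
  have h : ((a * 2 * (a * m + s))%N%:R : rat) = ((nb_blue X Pr * 2 + m * (a * a + a))%N)%:R.
    by rewrite eqR.
  by rewrite !(natrD, natrM) in h.
- have h : (('C(k, 2) * 2 + k)%N%:R : rat) = ((k * k)%N)%:R by rewrite bin2E.
  by rewrite !(natrD, natrM) in h.
- case: hc => [[e1 [e2 e3]] | [e1 [e2 e3]]].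
    left; rewrite e2 e3 e1 natrD; split; [ring | by []].
  right; rewrite e1 e2 natrB // -addn1 !natrD; split; ring.
Qed.
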